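(* Let $\omega>0$, $c\in[0,1]$ and $H(q,p)=\frac12\omega^{-2}p^2+\frac12(\omega^2+1)q^2$. Let $\psi_h=\varphi^{(B)}_{h/2}\circ\varphi^{(A)}_h\circ\varphi^{(B)}_{h/2}$, where $\varphi^{(A)}_t$ is the flow of $\dot q=\omega^{-2}p,\ \dot p=-c^2\omega^2q$ and $\varphi^{(B)}_t$ the flow of $\dot q=0,\ \dot p=-((1-c^2)\omega^2+1)q$. If $h>0$ satisfies $$ch+2\arctan\!\Big(\frac{h(1+(1-c^2)\omega^2)}{2c\omega^2}\Big)<\pi\ \text{ if }c\in(0,1],\qquad h<\frac{2\omega}{\sqrt{1+\omega^2}}\ \text{ if }c=0,$$ then the integrator is stable (the powers of its one-step matrix are bounded). *)

(* Defs.v *)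
From Stdlib Require Import Reals.
Open Scope R_scope.

Definition state := (R * R)%type.

Definition is_flow (V : state -> state) (phi : R -> state -> state) : Prop :=
  forall x : state,
    phi 0 x = x /\
    forall t : R,
      derivable_pt_lim (fun s => fst (phi s x)) t (fst (V (phi t x))) /\
      derivable_pt_lim (fun s => snd (phi s x)) t (snd (V (phi t x))).

Definition field_A (w c : R) (x : state) : state :=
  (/ (w ^ 2) * snd x, - (c ^ 2 * w ^ 2) * fst x).

Definition field_B (w c : R) (x : state) : state :=
  (0, - ((1 - c ^ 2) * w ^ 2 + 1) * fst x).

Definition strang (phiA phiB : R -> state -> state) (h : R) (x : state) : state :=
  phiB (h / 2) (phiA h (phiB (h / 2) x)).

Definition norm1 (x : state) : R := Rabs (fst x) + Rabs (snd x).

Definition stable (psi : state -> state) : Prop :=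
  exists K : R, forall (n : nat) (x : state),
    norm1 (Nat.iter n psi x) <= K * norm1 x.

(* Main.v *)
Require Import Defs.
From Stdlib Require Import Reals Lra Psatz.
Open Scope R_scope.

Lemma const0 (f : R -> R) : (forall t, derivable_pt_lim f t 0) -> forall t, f t = f 0.
Proof.
  intros H t.
  set (pr := fun t => exist (fun l => derivable_pt_abs f t l) 0 (H t) : derivable_pt f t).
  apply (null_derivative_1 f pr). intros x. reflexivity.
Qed.

Lemma dlim_ext (f g : R -> R) t l l' : (forall s, f s = g s) -> l = l' ->
  derivable_pt_lim f t l -> derivable_pt_lim g t l'.
Proof.
  intros E El H. subst l'. intros eps He. destruct (H eps He) as [d Hd].
  exists d. intros h H1 H2. rewrite <- !E. now apply Hd.
Qed.

Lemma flowB w c phi : is_flow (field_B w c) phi ->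
  forall t q p, phi t (q, p) = (q, p - ((1 - c ^ 2) * w ^ 2 + 1) * q * t).
Proof.
  intros HF t q p. set (k := (1 - c ^ 2) * w ^ 2 + 1).
  destruct (HF (q, p)) as [H0 Hd].
  assert (Hq : forall s, fst (phi s (q,p)) = q).
  { intros s. rewrite (const0 (fun s => fst (phi s (q,p)))). rewrite H0; reflexivity.
    intros t0. apply (Hd t0). }
  assert (Hp : forall s, snd (phi s (q,p)) + k * q * s = p).
  { intros s. rewrite (const0 (fun s => snd (phi s (q,p)) + k * q * s)).
    rewrite H0; simpl; ring.
    intros t0. destruct (Hd t0) as [_ H2]. simpl in H2. rewrite Hq in H2.
    assert (H3 := derivable_pt_lim_plus _ _ t0 _ _ H2
      (derivable_pt_lim_scal id (k*q) t0 1 (derivable_pt_lim_id t0))).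
    eapply dlim_ext; [| | exact H3].
    - intros s0. unfold plus_fct, mult_real_fct, id. reflexivity.
    - unfold k. ring. }
  rewrite (surjective_pairing (phi t (q,p))). rewrite Hq. f_equal.
  specialize (Hp t). fold k. lra.
Qed.

Lemma flowA w c phi (hw : 0 < w) : is_flow (field_A w c) phi ->
  forall q0 p0 (Q P : R -> R), Q 0 = q0 -> P 0 = p0 ->
  (forall t, derivable_pt_lim Q t (/ (w ^ 2) * P t)) ->
  (forall t, derivable_pt_lim P t (- (c ^ 2 * w ^ 2) * Q t)) ->
  forall t, phi t (q0, p0) = (Q t, P t).
Proof.
  intros HF q0 p0 Q P HQ HP dQ dP t.
  destruct (HF (q0, p0)) as [H0 Hd].
  set (u := fun s => fst (phi s (q0,p0)) - Q s).
  set (v := fun s => snd (phi s (q0,p0)) - P s).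
  set (mu := / (w ^ 2)). set (ka := c ^ 2 * w ^ 2).
  assert (mupos : 0 < mu) by (unfold mu; apply Rinv_0_lt_compat; nra).
  assert (kanon : 0 <= ka) by (unfold ka; nra).
  assert (du : forall t, derivable_pt_lim u t (mu * v t)).
  { intros t0. destruct (Hd t0) as [H1 _]. cbn [fst snd field_A] in H1.
    assert (H3 := derivable_pt_lim_minus _ _ t0 _ _ H1 (dQ t0)).
    eapply dlim_ext; [| | exact H3]. intros s; reflexivity. unfold v, mu. ring. }
  assert (dv : forall t, derivable_pt_lim v t (- ka * u t)).
  { intros t0. destruct (Hd t0) as [_ H1]. cbn [fst snd field_A] in H1.
    assert (H3 := derivable_pt_lim_minus _ _ t0 _ _ H1 (dP t0)).
    eapply dlim_ext; [| | exact H3]. intros s; reflexivity. unfold u, ka; ring. }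
  assert (u0 : u 0 = 0) by (unfold u; rewrite H0, HQ; simpl; ring).
  assert (v0 : v 0 = 0) by (unfold v; rewrite H0, HP; simpl; ring).
  assert (E : forall s, ka * (u s * u s) + mu * (v s * v s) = 0).
  { intros s. rewrite (const0 (fun s => ka * (u s * u s) + mu * (v s * v s))).
    rewrite u0, v0; ring.
    intros t0.
    assert (H3 := derivable_pt_lim_plus _ _ t0 _ _
       (derivable_pt_lim_scal _ ka t0 _ (derivable_pt_lim_mult _ _ t0 _ _ (du t0) (du t0)))
       (derivable_pt_lim_scal _ mu t0 _ (derivable_pt_lim_mult _ _ t0 _ _ (dv t0) (dv t0)))).
    eapply dlim_ext; [| | exact H3].
    - intros s0. unfold plus_fct, mult_real_fct, mult_fct. reflexivity.
    - ring. }
  assert (vz : forall s, v s = 0).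
  { intros s. specialize (E s). generalize (u s) (v s) E. clear -mupos kanon. clearbody mu ka. intros a b E.
    assert (H3: 0 <= ka * (a*a)) by (apply Rmult_le_pos; [exact kanon| apply Rle_0_sqr]).
    assert (H4: mu * (b*b) = 0) by (assert (0 <= mu*(b*b)) by (apply Rmult_le_pos; [lra|apply Rle_0_sqr]); lra).
    apply Rmult_integral in H4. destruct H4 as [H4|H4]. lra. apply Rmult_integral in H4; tauto. }
  assert (uz : forall s, u s = 0).
  { intros s. rewrite (const0 u). exact u0. intros t0.
    eapply dlim_ext; [| | exact (du t0)]. reflexivity. rewrite vz; ring. }
  rewrite (surjective_pairing (phi t (q0,p0))).
  specialize (uz t); specialize (vz t). unfold u, v in *. f_equal; lra.
Qed.
Definition Lm (a b c d : R) (x : state) : state :=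
  (a * fst x + b * snd x, c * fst x + d * snd x).

Lemma sq_le_norm1 (x : state) : fst x ^ 2 + snd x ^ 2 <= norm1 x ^ 2.
Proof.
  unfold norm1. destruct x as [q p]; simpl.
  assert (Rabs q * Rabs q = q * q) by (rewrite <- Rabs_mult; apply Rabs_right; nra).
  assert (Rabs p * Rabs p = p * p) by (rewrite <- Rabs_mult; apply Rabs_right; nra).
  pose proof (Rabs_pos q); pose proof (Rabs_pos p). nra.
Qed.

Lemma norm1_le_sq (x : state) : norm1 x ^ 2 <= 2 * (fst x ^ 2 + snd x ^ 2).
Proof.
  unfold norm1. destruct x as [q p]; simpl.
  assert (Rabs q * Rabs q = q * q) by (rewrite <- Rabs_mult; apply Rabs_right; nra).
  assert (Rabs p * Rabs p = p * p) by (rewrite <- Rabs_mult; apply Rabs_right; nra).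
  pose proof (Rabs_pos q); pose proof (Rabs_pos p).
  assert (0 <= (Rabs q - Rabs p)^2) by apply pow2_ge_0. nra.
Qed.

Lemma lin_stable a b c d : a * d - b * c = 1 -> (a + d) ^ 2 < 4 -> stable (Lm a b c d).
Proof.
  intros Hdet Htr.
  set (al := - b * c). set (be := - b * (d - a)). set (ga := b * b).
  set (F := fun x : state => al * fst x ^ 2 + be * fst x * snd x + ga * snd x ^ 2).
  assert (Finv : forall x, F (Lm a b c d x) = F x).
  { intros [q p]. unfold F, Lm, al, be, ga; simpl.
    transitivity ((a * d - b * c) * (- b * c * q ^ 2 + - b * (d - a) * q * p + b * b * p ^ 2)).
    ring. rewrite Hdet; ring. }
  assert (Fit : forall n x, F (Nat.iter n (Lm a b c d) x) = F x).
  { induction n; intros x; simpl. reflexivity. rewrite Finv. apply IHn. }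
  assert (bnz : b <> 0).
  { intros ->. assert (0 <= (a - d) ^2) by apply pow2_ge_0. nra. }
  set (de := b * b * (4 - (a + d) ^ 2)).
  assert (depos : 0 < de) by (unfold de; assert (0 < b*b) by nra; nra).
  assert (Hde : 4 * al * ga - be * be = de) by (unfold al, be, ga, de; nra).
  assert (gapos : 0 < ga) by (unfold ga; nra).
  assert (alpos : 0 < al) by nra.
  assert (Flow : forall x, de * (fst x ^ 2 + snd x ^ 2) <= 4 * (al + ga) * F x).
  { intros [q p]. unfold F; simpl.
    assert (0 <= (2 * al * q + be * p) ^2) by apply pow2_ge_0.
    assert (0 <= (2 * ga * p + be * q) ^2) by apply pow2_ge_0.
    nra. }
  set (U := al + Rabs be + ga).
  assert (Fup : forall x, F x <= U * (fst x ^ 2 + snd x ^ 2)).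
  { intros [q p]. unfold F, U; simpl.
    assert (be * q * p <= Rabs be * (q ^ 2 + p ^ 2)).
    { assert (be * q * p <= Rabs (be * q * p)) by apply Rle_abs.
      rewrite !Rabs_mult in H.
      assert (Rabs q * Rabs p <= q^2 + p^2).
      { assert (Rabs q * Rabs q = q * q) by (rewrite <- Rabs_mult; apply Rabs_right; nra).
        assert (Rabs p * Rabs p = p * p) by (rewrite <- Rabs_mult; apply Rabs_right; nra).
        pose proof (Rabs_pos q); pose proof (Rabs_pos p).
        assert (0 <= (Rabs q - Rabs p)^2) by apply pow2_ge_0. nra. }
      pose proof (Rabs_pos be). nra. }
    nra. }
  set (C := 8 * (al + ga) * U / de).
  assert (Upos : 0 < U) by (unfold U; pose proof (Rabs_pos be); lra).
  exists (1 + C). intros n x.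
  set (y := Nat.iter n (Lm a b c d) x).
  assert (Hsq : norm1 y ^ 2 <= C * norm1 x ^ 2).
  { pose proof (norm1_le_sq y). pose proof (sq_le_norm1 x).
    pose proof (Flow y). pose proof (Fup x). pose proof (Fit n x). fold y in H3.
    assert (de * (fst y ^ 2 + snd y ^ 2) <= 4 * (al + ga) * U * norm1 x ^ 2).
    { rewrite H3 in H1. assert (0 <= 4 * (al+ga)) by lra.
      assert (0 <= fst x ^ 2 + snd x ^2) by (pose proof (pow2_ge_0 (fst x)); pose proof (pow2_ge_0 (snd x)); lra).
      apply Rle_trans with (1 := H1). replace (4 * (al + ga) * U * norm1 x ^ 2) with (4 * (al + ga) * (U * norm1 x ^ 2)) by ring. apply Rmult_le_compat_l; auto.
      apply Rle_trans with (1 := H2). apply Rmult_le_compat_l; lra. }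
    unfold C.
    apply Rle_trans with (2 * (fst y ^ 2 + snd y ^ 2)); auto.
    apply Rmult_le_reg_l with de; auto.
    replace (de * (8 * (al + ga) * U / de * norm1 x ^ 2)) with (2 * (4 * (al + ga) * U * norm1 x ^ 2)) by (field; lra).
    lra. }
  assert (Cpos : 0 <= C) by (unfold C; apply Rmult_le_pos; [apply Rmult_le_pos; lra | left; apply Rinv_0_lt_compat; lra]).
  assert (nx : 0 <= norm1 x) by (unfold norm1; pose proof (Rabs_pos (fst x)); pose proof (Rabs_pos (snd x)); lra).
  assert (ny : 0 <= norm1 y) by (unfold norm1; pose proof (Rabs_pos (fst y)); pose proof (Rabs_pos (snd y)); lra).
  destruct (Rle_or_lt (norm1 y) ((1 + C) * norm1 x)) as [Hle|Hlt]; auto.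
  exfalso. clearbody y C. clear -Hsq Cpos nx ny Hlt.
  generalize (norm1 x) (norm1 y) Hsq Cpos nx ny Hlt. clear. intros a b H4 H1 H2 H3 H5.
  assert (H6: (1 + C) * a * ((1 + C) * a) <= b * b) by (apply Rmult_le_compat; nra).
  assert (H7: a * a * (1 + C + C*C) <= 0) by nra.
  assert (H8: a * a <= 0).
  { apply Rmult_le_reg_r with (1 + C + C*C). nra. lra. }
  assert (a = 0) by nra. subst. nra.
Qed.
Lemma dlin c t : derivable_pt_lim (fun s => c * s) t c.
Proof.
  eapply dlim_ext; [| | exact (derivable_pt_lim_scal id c t 1 (derivable_pt_lim_id t))].
  intros s; reflexivity. ring.
Qed.

Lemma dcos c t : derivable_pt_lim (fun s => cos (c * s)) t (- sin (c * t) * c).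
Proof.
  eapply dlim_ext; [| | exact (derivable_pt_lim_comp _ cos t _ _ (dlin c t) (derivable_pt_lim_cos _))].
  intros s; reflexivity. reflexivity.
Qed.

Lemma dsin c t : derivable_pt_lim (fun s => sin (c * s)) t (cos (c * t) * c).
Proof.
  eapply dlim_ext; [| | exact (derivable_pt_lim_comp _ sin t _ _ (dlin c t) (derivable_pt_lim_sin _))].
  intros s; reflexivity. reflexivity.
Qed.

Lemma dcomb (f g : R -> R) a b t lf lg : derivable_pt_lim f t lf -> derivable_pt_lim g t lg ->
  derivable_pt_lim (fun s => a * f s + b * g s) t (a * lf + b * lg).
Proof.
  intros Hf Hg.
  eapply dlim_ext; [| | exact (derivable_pt_lim_plus _ _ t _ _ (derivable_pt_lim_scal _ a t _ Hf) (derivable_pt_lim_scal _ b t _ Hg))].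
  intros s; reflexivity. reflexivity.
Qed.

Lemma dconst a t : derivable_pt_lim (fun _ => a) t 0.
Proof. apply derivable_pt_lim_const. Qed.

Lemma stable_ext (psi phi : state -> state) : (forall x, psi x = phi x) -> stable phi -> stable psi.
Proof.
  intros E [K HK]. exists K. intros n x.
  replace (Nat.iter n psi x) with (Nat.iter n phi x). apply HK.
  induction n; simpl. reflexivity. rewrite IHn, E. reflexivity.
Qed.

Lemma strang_L (phiA phiB : R -> state -> state) h k A11 A12 A21 A22 :
  (forall q p, phiA h (q,p) = (A11*q + A12*p, A21*q + A22*p)) ->
  (forall t q p, phiB t (q,p) = (q, p - k*q*t)) ->
  forall x, strang phiA phiB h x =
    Lm (A11 - A12*k*(h/2)) A12 (A21 - A22*k*(h/2) - k*(h/2)*(A11 - A12*k*(h/2)))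
       (A22 - k*(h/2)*A12) x.
Proof.
  intros HA HB [q p]. unfold strang, Lm. rewrite HB, HA, HB. simpl. f_equal; ring.
Qed.

Lemma strang_stable (phiA phiB : R -> state -> state) h k A11 A12 A21 A22 :
  (forall q p, phiA h (q,p) = (A11*q + A12*p, A21*q + A22*p)) ->
  (forall t q p, phiB t (q,p) = (q, p - k*q*t)) ->
  A11 * A22 - A12 * A21 = 1 ->
  -2 < A11 + A22 - A12 * k * h < 2 ->
  stable (strang phiA phiB h).
Proof.
  intros HA HB Hdet Htr.
  eapply stable_ext. apply (strang_L phiA phiB h k A11 A12 A21 A22 HA HB).
  apply lin_stable.
  - rewrite <- Hdet. ring.
  - replace (A11 - A12 * k * (h / 2) + (A22 - k * (h / 2) * A12)) with (A11 + A22 - A12 * k * h) by field.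
    nra.
Qed.

Theorem proposition9p2 (w c h : R) (phiA phiB : R -> state -> state)
  (hw : 0 < w) (hc : 0 <= c <= 1) (hh : 0 < h)
  (hA : is_flow (field_A w c) phiA) (hB : is_flow (field_B w c) phiB)
  (hcond : (0 < c /\
            c * h + 2 * atan (h * (1 + (1 - c ^ 2) * w ^ 2) / (2 * c * w ^ 2)) < PI)
           \/ (c = 0 /\ h < 2 * w / sqrt (1 + w ^ 2))) :
  stable (strang phiA phiB h).
Proof.
  pose proof (flowB w c phiB hB) as HB.
  set (k := (1 - c ^ 2) * w ^ 2 + 1) in HB.
  assert (w2 : 0 < w ^ 2) by nra.
  assert (kpos : 0 < k) by (unfold k; assert (c ^ 2 <= 1) by nra; nra).
  destruct hcond as [[cpos Hc] | [c0 Hh]].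
  - apply (strang_stable phiA phiB h k (cos (c*h)) (sin (c*h) / (c * w^2))
             (- (c * w^2) * sin (c*h)) (cos (c*h))); auto.
    + intros q p.
      rewrite (flowA w c phiA hw hA q p
        (fun s => q * cos (c * s) + (p / (c * w ^ 2)) * sin (c * s))
        (fun s => (- (c * w ^ 2) * q) * sin (c * s) + p * cos (c * s))).
      * f_equal; field; lra.
      * rewrite Rmult_0_r, cos_0, sin_0. ring.
      * rewrite Rmult_0_r, cos_0, sin_0. ring.
      * intros t. eapply dlim_ext; [| | exact (dcomb _ _ q (p / (c * w ^ 2)) t _ _ (dcos c t) (dsin c t))].
        intros s; reflexivity. field; lra.
      * intros t. eapply dlim_ext; [| | exact (dcomb _ _ (- (c * w ^ 2) * q) p t _ _ (dsin c t) (dcos c t))].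
        intros s; reflexivity. field; lra.
    + assert (E : sin (c * h) ^ 2 + cos (c * h) ^ 2 = 1)
        by (rewrite <- (sin2_cos2 (c*h)); unfold Rsqr; ring).
      rewrite <- E. field. lra.
    + set (be := h * (1 + (1 - c ^ 2) * w ^ 2) / (2 * c * w ^ 2)) in Hc.
      assert (bepos : 0 < be).
      { unfold be. apply Rdiv_lt_0_compat. apply Rmult_lt_0_compat; auto.
        replace (1 + (1 - c ^ 2) * w ^ 2) with k by (unfold k; ring). auto.
        apply Rmult_lt_0_compat; lra. }
      set (th := c * h / 2).
      assert (thpos : 0 < th) by (unfold th; nra).
      set (ph := atan be).
      assert (phpos : 0 < ph) by (unfold ph; rewrite <- atan_0; apply atan_increasing; auto).
      assert (Hsum : th + ph < PI / 2) by (unfold th, ph; lra).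
      pose proof (atan_bound be) as Hb. fold ph in Hb.
      assert (sp : 0 < sin th) by (apply sin_gt_0; lra).
      assert (cp : 0 < cos th) by (apply cos_gt_0; lra).
      assert (cph : 0 < cos ph) by (apply cos_gt_0; lra).
      assert (cs : 0 < cos (th + ph)) by (apply cos_gt_0; lra).
      assert (tb : sin ph / cos ph = be) by (unfold ph; rewrite <- (tan_atan be) at 3; reflexivity).
      assert (key : 0 < cos th - be * sin th).
      { rewrite cos_plus in cs. rewrite <- tb in *.
        assert (H1 : (cos th - sin ph / cos ph * sin th) * cos ph = cos th * cos ph - sin th * sin ph) by (field; lra).
        destruct (Rle_or_lt (cos th - sin ph / cos ph * sin th) 0) as [Hn|Hp]; auto.
        exfalso. assert ((cos th - sin ph / cos ph * sin th) * cos ph <= 0).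
        { rewrite <- (Rmult_0_l (cos ph)). apply Rmult_le_compat_r; lra. }
        lra. }
      assert (Ech : c * h = 2 * th) by (unfold th; field).
      assert (Etr : cos (c * h) + cos (c * h) - sin (c * h) / (c * w ^ 2) * k * h
                    = 2 * cos (2 * th) - 2 * be * sin (2 * th)).
      { rewrite Ech. unfold be, k. field. lra. }
      rewrite Etr, cos_2a_sin, sin_2a.
      assert (E : sin th ^ 2 + cos th ^ 2 = 1)
        by (rewrite <- (sin2_cos2 th); unfold Rsqr; ring).
      assert (P1 : 0 < sin th * sin th) by (apply Rmult_lt_0_compat; auto).
      assert (P2 : 0 < be * (sin th * cos th)) by (apply Rmult_lt_0_compat; auto; apply Rmult_lt_0_compat; auto).
      assert (P3 : 0 < cos th * (cos th - be * sin th)) by (apply Rmult_lt_0_compat; auto).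
      split; nra.
  - subst c.
    apply (strang_stable phiA phiB h k 1 (h / w ^ 2) 0 1); auto.
    + intros q p.
      rewrite (flowA w 0 phiA hw hA q p (fun s => q * 1 + (p / w ^ 2) * s) (fun s => p)).
      * f_equal; field; lra.
      * ring.
      * reflexivity.
      * intros t. eapply dlim_ext; [| | exact (dcomb (fun _ => 1) id q (p / w ^ 2) t 0 1 (dconst 1 t) (derivable_pt_lim_id t))].
        intros s; reflexivity. field; lra.
      * intros t. eapply dlim_ext; [| | exact (dconst p t)]. intros s; reflexivity. ring.
    + ring.
    + set (r := sqrt (1 + w ^ 2)) in Hh.
      assert (rpos : 0 < r) by (unfold r; apply sqrt_lt_R0; lra).
      assert (rr : r * r = 1 + w ^ 2) by (unfold r; apply sqrt_sqrt; lra).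
      assert (hr : h * r < 2 * w).
      { apply Rmult_lt_reg_r with (/ r). apply Rinv_0_lt_compat; auto.
        replace (h * r * / r) with h by (field; lra). exact Hh. }
      assert (hr2 : (h * r) * (h * r) < (2 * w) * (2 * w)).
      { apply Rmult_le_0_lt_compat; auto; left; apply Rmult_lt_0_compat; auto. }
      set (z := h / w ^ 2 * k * h).
      assert (Ez : z * w ^ 2 = h * h * (1 + w ^ 2)) by (unfold z, k; field; lra).
      assert (zpos : 0 < z) by (unfold z; apply Rmult_lt_0_compat; auto; apply Rmult_lt_0_compat; auto;
                                apply Rdiv_lt_0_compat; auto).
      assert (z4 : z * w ^ 2 < 4 * w ^ 2) by (rewrite Ez; nra).
      assert (z < 4) by (apply Rmult_lt_reg_r with (w ^ 2); auto).
      lra.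
Qed.
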